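(* Let $n>0$ be an integer, $C_1>0$ a constant, and let $P$ be a real monic polynomial of degree $n$ in one real variable. For each integer $k\geq 0$ let $\tilde{P}_k(x):=2^{-nk}P(2^kx)$ and $$E_k:=\left\{x\in\mathbb{R}:\ \left|\frac{\tilde{P}_k(x)}{\tilde{P}_k'(x)}\right|\leq\frac{4}{C_1}\ \text{and}\ \left(\frac{\tilde{P}_k}{\tilde{P}_k'}\right)'(x)\leq\frac{1}{8n}\right\}.$$ Then for any $\alpha\in(0,1)$, $\sum_{k\geq 0}|E_k|^{\alpha}\leq C$, where $C$ depends only on $n$ and $C_1$ (and not on the coefficients of $P$).
   Context: $|E|$ denotes the Lebesgue measure of $E\subset\mathbb{R}$. *)

(* Defs.v *)
From HB Require Import structures.
From mathcomp Require Import all_boot all_order all_algebra.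
From mathcomp Require Import all_classical all_reals all_analysis.
Set Implicit Arguments. Unset Strict Implicit. Unset Printing Implicit Defensive.
Import Order.TTheory GRing.Theory Num.Theory.
Local Open Scope classical_set_scope.
Local Open Scope ring_scope.

Definition Ptilde {R : realType} (n : nat) (P : {poly R}) (k : nat) : R -> R :=
  fun x => (2 : R) ^- (n * k) * P.[(2 : R) ^+ k * x].

Definition Eset {R : realType} (n : nat) (C1 : R) (P : {poly R}) (k : nat)
  : set R :=
  [set x | let f := Ptilde n P k in
           let q := fun y => f y / derive1 f y in
           derive1 f x != 0 /\
           `| q x | <= 4 / C1 /\
           derive1 q x <= 1 / (8 * n%:R)].

(* Main.v *)
Require Import Defs.
From HB Require Import structures.
From mathcomp Require Import all_boot all_order all_algebra.
From mathcomp Require Import all_classical all_reals all_analysis.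
Import Order.TTheory GRing.Theory Num.Theory.
From mathcomp Require Import complex.
From mathcomp Require Import ring lra.
Local Open Scope classical_set_scope.
Local Open Scope ring_scope.


Section S.
Variable R : realType.
Local Notation C := (R[i]).
Local Notation Re := (@complex.Re R).
Local Notation Im := (@complex.Im R).
Definition Pi (s : seq C) : {poly C} := \prod_(z <- s) ('X - z%:P).
Definition S1 (s : seq C) (y : C) := \sum_(z <- s) (y - z)^-1.
Definition S2 (s : seq C) (y : C) := \sum_(z <- s) ((y - z)^-1)^+2.

Lemma Pi_deriv (s : seq C) (y : C) : all (fun z => y != z) s ->
  (Pi s)^`().[y] = (Pi s).[y] * S1 s y /\
  (Pi s)^`()^`().[y] = (Pi s).[y] * (S1 s y ^+ 2 - S2 s y).
Proof.
elim: s => [|z s IH] /=.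
  by rewrite /Pi /S1 /S2 !big_nil derivC derivC !hornerE; split; ring.
move=> /andP[yz /IH [h1 h2]].
rewrite /Pi /S1 /S2 !big_cons -/(Pi s) -/(S1 s y) -/(S2 s y).
have yz' : y - z != 0 by rewrite subr_eq0.
rewrite !derivM !derivD !derivX !derivN !derivC !(derivD, derivM, derivN, derivX, derivC).
rewrite !hornerE h1 h2 !subr0 !oppr0 !mul0r !mul1r add0r.
 split. field. exact yz'. change ((Pi s).[y] * S1 s y + (Pi s).[y] * S1 s y + (y - z) * ((Pi s).[y] * (S1 s y ^+ 2 - S2 s y)) = (y - z) * (Pi s).[y] * (((y - z)^-1 + S1 s y) ^+ 2 - ((y - z)^-1 ^+ 2 + S2 s y))). field. exact yz'.
Qed.

Lemma CS_seq (T : Type) (s : seq T) (f : T -> R) :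
  (\sum_(z <- s) f z)^+2 <= (size s)%:R * \sum_(z <- s) (f z)^+2.
Proof.
elim: s => [|z s IH]; first by rewrite !big_nil /= expr0n /= mul0r.
rewrite !big_cons /=.
set A := \sum_(z <- s) f z in IH *; set B := \sum_(z <- s) (f z)^+2 in IH *.
set m := (size s)%:R in IH *.
have m0 : 0 <= m by rewrite /m ler0n.
have B0 : 0 <= B by rewrite /B sumr_ge0 // => i _; rewrite sqr_ge0.
rewrite -[(size s).+1]addn1 natrD -/m.
have key : 2 * f z * A <= m * (f z)^+2 + B.
  have [e|mp] := eqVneq m 0.
    move: IH; rewrite e !mul0r => IH.
    have : A ^+ 2 = 0 by apply/le_anti; rewrite IH sqr_ge0.
    move/eqP; rewrite sqrf_eq0 => /eqP ->; rewrite mulr0 add0r //.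
  have mp' : 0 < m by rewrite lt_def mp m0.
  have : 0 <= (m * f z - A)^+2 by rewrite sqr_ge0.
  move=> h.
  have h2 : 2 * m * f z * A <= m^+2 * (f z)^+2 + m * B by nra.
  have : m * (2 * f z * A) <= m * (m * f z ^+ 2 + B) by nra.
  by rewrite ler_pM2l.
nra.
Qed.

Lemma sum_le_const (T : eqType) (s : seq T) (f : T -> R) (m : R) :
  (forall z, z \in s -> f z <= m) -> \sum_(z <- s) f z <= (size s)%:R * m.
Proof.
elim: s => [|z s IH] h; first by rewrite big_nil mul0r.
rewrite big_cons /= -[(size s).+1]addn1 natrD mulrDl mul1r addrC lerD //.
  by apply: IH => y ys; apply: h; rewrite inE ys orbT.
by apply: h; rewrite inE eqxx.
Qed.

Lemma ReD (a b : C) : Re (a + b) = Re a + Re b.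
Proof. by case: a => a1 a2; case: b => b1 b2. Qed.

Lemma Re_sum (T : Type) (s : seq T) (F : T -> C) :
  Re (\sum_(z <- s) F z) = \sum_(z <- s) Re (F z).
Proof.
elim: s => [|z s IH]; first by rewrite !big_nil.
by rewrite !big_cons ReD IH.
Qed.

Lemma Re_sqr (w : C) : Re (w ^+ 2) = Re w ^+ 2 - Im w ^+ 2.
Proof. by case: w => a b; rewrite /= !expr2. Qed.

Lemma Im_inv (x : R) (z : C) :
  Im ((x%:C)%C - z)^-1 = Im z / ((x - Re z)^+2 + (Im z)^+2).
Proof. by case: z => u v /=; rewrite sub0r sqrrN mulNr opprK. Qed.
End S.

Arguments Pi {R}. Arguments S1 {R}. Arguments S2 {R}. Arguments Pi_deriv {R s y}.
Section S.
Variable R : realType.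
Local Notation C := (R[i]).
Local Notation Re := (@complex.Re R).
Local Notation Im := (@complex.Im R).

Lemma lra_help {A B X t : R} : A - B = X -> B <= t/2 -> X <= t/8 -> t <= A -> 0 < t -> False.
Proof. move=> *; lra. Qed.

Lemma stepA (Q : {poly R}) (s : seq C) (T x : R) :
  map_poly (real_complex R) Q = Pi s -> (0 < size s)%N -> 0 < T ->
  Q^`().[x] != 0 -> `|Q.[x] / Q^`().[x]| <= T ->
  1 - Q.[x] * Q^`()^`().[x] / Q^`().[x]^+2 <= 1/(8 * (size s)%:R) ->
  exists2 z, z \in s & (x - Re z)^+2 + (Im z)^+2 <= 2 * (size s)%:R * T * `|Im z|.
Proof.
move=> HQ s0 T0 b0 hT hq.
set a := Q.[x] in hT hq *; set b := Q^`().[x] in b0 hT hq *.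
set c := Q^`()^`().[x] in hq *.
set m := (size s)%:R in hq *.
have m1 : 1 <= m by rewrite /m ler1n.
have a0 : a != 0.
  apply/eqP=> a0; move: hq; rewrite a0 !mul0r subr0.
  have : 1 / (8 * m) < 1 by rewrite ltr_pdivrMr ?mul1r; lra.
  lra.
set y := (x%:C)%C.
have Ha : (Pi s).[y] = (a%:C)%C by rewrite -HQ horner_map.
have Hb : (Pi s)^`().[y] = (b%:C)%C by rewrite -HQ deriv_map horner_map.
have Hc : (Pi s)^`()^`().[y] = (c%:C)%C by rewrite -HQ !deriv_map horner_map.
have aC0 : (a%:C)%C != 0 :> C by rewrite fmorph_eq0.
have ys : all (fun z => y != z) s.
  apply/allP => z zs; apply/eqP => e.
  have : root (Pi s) y by rewrite /Pi root_prod_XsubC e.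
  by rewrite /root Ha (negbTE aC0).
have [h1 h2] := Pi_deriv ys.
rewrite Ha Hb Hc in h1 h2.
set σ := b / a.
have eS1 : S1 s y = (σ%:C)%C.
  apply: (mulfI aC0); rewrite -h1 /σ rmorphM fmorphV /= mulrC divfK //.
have eS2 : S2 s y = ((σ^+2 - c/a)%:C)%C.
  have : S2 s y = S1 s y ^+ 2 - (c%:C)%C / (a%:C)%C.
    by rewrite h2; field.
  by move=> ->; rewrite eS1 /σ rmorphB rmorphXn !rmorphM !fmorphV.
have ReS1 : \sum_(z <- s) Re ((y - z)^-1) = σ.
  by have := congr1 Re eS1; rewrite /S1 Re_sum.
have ReS2 : \sum_(z <- s) (Re ((y - z)^-1) ^+ 2 - Im ((y - z)^-1) ^+ 2) = σ^+2 - c/a.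
  have := congr1 Re eS2; rewrite /S2 Re_sum /= => <-.
  by apply: eq_bigr => z _; rewrite Re_sqr.
rewrite sumrB in ReS2.
set A2 := \sum_(z <- s) Re ((y - z)^-1) ^+ 2 in ReS2.
set B2 := \sum_(z <- s) Im ((y - z)^-1) ^+ 2 in ReS2.
have CS : σ ^+ 2 <= m * A2 by rewrite -ReS1; apply: CS_seq.
have sig0 : σ != 0 by rewrite /σ mulf_neq0 // invr_neq0.
have m0 : 0 < m by lra.
have sig2 : 0 < σ ^+ 2 by rewrite exprn_even_gt0.
have cond : σ^+2 - c/a <= σ^+2 / (8 * m).
  have -> : σ^+2 - c/a = σ^+2 * (1 - a * c / b ^+ 2) by rewrite /σ; field; rewrite a0 b0.
  by have := ler_wpM2l (ltW sig2) hq; rewrite mul1r.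
have [z zs hz] : exists2 z, z \in s & σ^+2 / (2 * m^+2) < Im ((y - z)^-1) ^+ 2.
  case: (pselect (exists2 z, z \in s & σ^+2 / (2 * m^+2) < Im ((y - z)^-1) ^+ 2)) => [//|H].
  exfalso.
  have HB : B2 <= m * (σ^+2 / (2 * m^+2)).
    apply: sum_le_const => z zs; rewrite leNgt; apply/negP => hlt; apply: H; by exists z.
  set t := σ^+2 / m.
  have e1 : m * (σ^+2 / (2 * m^+2)) = t / 2 by rewrite /t; field; rewrite gt_eqF.
  have e2 : σ^+2 / (8 * m) = t / 8 by rewrite /t; field; rewrite gt_eqF.
  have t0 : 0 < t by rewrite /t divr_gt0.
  have hA : t <= A2 by rewrite /t ler_pdivrMr // mulrC.
  rewrite e1 in HB; rewrite e2 in cond.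
  exact: (lra_help ReS2 HB cond hA t0).
exists z => //.
move: hz; rewrite Im_inv.
set u := Re z; set v := Im z; set D := (x - u) ^+ 2 + v ^+ 2 => hz.
have D0 : 0 <= D by rewrite /D addr_ge0 // sqr_ge0.
have K0 : 0 <= 2 * m * T * `|v| by rewrite !mulr_ge0 // ?ltW.
have [->|Dp] := eqVneq D 0; first exact: K0.
have Dp' : 0 < D by rewrite lt_def Dp D0.
have hT2 : 1 <= T ^+ 2 * σ ^+ 2.
  have eab : a / b = σ^-1 by rewrite /σ invf_div.
  rewrite eab normfV in hT.
  have hs : 0 < `|σ| by rewrite normr_gt0.
  have : 1 <= T * `|σ| by rewrite -ler_pdivrMr // mul1r.
  move=> hh; have : 1 <= (T * `|σ|) ^+ 2 by rewrite (le_trans hh) // ler_eXnr // ?ler1n.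
  by rewrite exprMn real_normK // num_real.
have hz2 : σ^+2 * D^+2 < 2 * m^+2 * v^+2.
  clearbody σ.
  move: hz; rewrite [(v / D) ^+ 2]expr_div_n ltr_pdivrMr; last by rewrite mulr_gt0 // exprn_gt0.
  rewrite mulrAC ltr_pdivlMr ?exprn_gt0 // => hz.
  by rewrite [X in _ < X]mulrC.
have : D^+2 <= (2 * m * T * `|v|)^+2.
  rewrite !exprMn real_normK ?num_real //.
  have h3 : D^+2 <= T^+2 * σ^+2 * D^+2 by rewrite -[X in X <= _]mul1r; apply: ler_wpM2r => //; exact: sqr_ge0.
  have h4 : T^+2 * (σ^+2 * D^+2) <= T^+2 * (2 * m^+2 * v^+2) by apply: ler_wpM2l; [exact: sqr_ge0|exact: ltW].
  rewrite mulrA in h4.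
  have h5 : 0 <= T^+2 * m^+2 * v^+2 by apply: mulr_ge0; [apply: mulr_ge0|]; exact: sqr_ge0.
  nra.
by rewrite ler_sqr // nnegrE.
Qed.
End S.

Section S.
Variable R : realType.

Lemma series_le (f : nat -> \bar R) (M : R) : (forall k, (0 <= f k)%E) ->
  (forall N, (\sum_(0 <= k < N) f k <= M%:E)%E) -> (\sum_(0 <= k <oo) f k <= M%:E)%E.
Proof.
move=> f0 hN.
apply: lime_le; first exact: is_cvg_nneseries.
by near=> N; apply: hN.
Unshelve. all: by end_near.
Qed.

Lemma powR_subadd {a b al : R} : 0 <= a -> 0 <= b -> 0 < al <= 1 ->
  (a + b) `^ al <= a `^ al + b `^ al.
Proof.
move=> a0 b0 /andP[al0 al1].
have [->|an0] := eqVneq a 0; first by rewrite add0r powR0 ?gt_eqF // add0r.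
have [->|bn0] := eqVneq b 0; first by rewrite addr0 powR0 ?gt_eqF // addr0.
have ap : 0 < a by rewrite lt_def an0 a0.
have bp : 0 < b by rewrite lt_def bn0 b0.
have sp : 0 < a + b by rewrite addr_gt0.
have ta : a / (a + b) <= (a / (a + b)) `^ al.
  apply: ger1_powR => //; rewrite divr_gt0 //= ler_pdivrMr // mul1r lerDl //.
have tb : b / (a + b) <= (b / (a + b)) `^ al.
  apply: ger1_powR => //; rewrite divr_gt0 //= ler_pdivrMr // mul1r lerDr //.
have ea : a `^ al = (a / (a + b)) `^ al * (a + b) `^ al.
  by rewrite -powRM ?divrK ?unitfE ?gt_eqF // ?divr_ge0 // ltW.
have eb : b `^ al = (b / (a + b)) `^ al * (a + b) `^ al.
  by rewrite -powRM ?divrK ?unitfE ?gt_eqF // ?divr_ge0 // ltW.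
have pp : 0 <= (a + b) `^ al by apply: powR_ge0.
rewrite ea eb -mulrDl.
apply: (@le_trans _ _ ((a / (a + b) + b / (a + b)) * (a + b) `^ al)).
  by rewrite -mulrDl divff ?gt_eqF // mul1r.
by apply: ler_wpM2r => //; apply: lerD.
Qed.

Lemma powR_subadd_seq (T : Type) (s : seq T) (g : T -> R) (al : R) :
  (forall z, 0 <= g z) -> 0 < al <= 1 ->
  (\sum_(z <- s) g z) `^ al <= \sum_(z <- s) (g z) `^ al.
Proof.
move=> g0 hal; elim: s => [|z s IH].
  by rewrite !big_nil powR0 // gt_eqF //; case/andP: hal.
rewrite !big_cons.
have s0 : 0 <= \sum_(j <- s) g j by apply: sumr_ge0.
apply: le_trans (powR_subadd (g0 z) s0 hal) _.
by apply: lerD.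
Qed.

Definition hfun (al v : R) : R := if v <= 1 then (Num.sqrt v) `^ al else 0.
Definition mfun (al v : R) : R := if v <= 1 then (Num.sqrt v) `^ al else 1.
Definition theta (al : R) : R := (Num.sqrt (2^-1)) `^ al.

Lemma theta_lt1 {al} : 0 < al -> 0 <= theta al < 1.
Proof.
move=> al0; rewrite /theta powR_ge0 /=.
have h1 : 0 < Num.sqrt (2^-1 : R) by rewrite sqrtr_gt0 invr_gt0.
have h2 : Num.sqrt (2^-1 : R) < 1.
  by rewrite -{2}sqrtr1 ltr_sqrt ?ltr01 // invf_lt1 // ltr1n.
by have := gt0_ltr_powR al0 (ltW h1) ler01 h2; rewrite powR1.
Qed.

Lemma mfun_le1 {al v} : 0 < al -> 0 <= v -> mfun al v <= 1.
Proof.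
move=> al0 v0; rewrite /mfun; case: ifP => // v1.
have := @ge0_ler_powR R al (ltW al0) (Num.sqrt v) 1.
rewrite powR1; apply; rewrite ?nnegrE ?sqrtr_ge0 //.
by rewrite -sqrtr1 ler_sqrt.
Qed.

Lemma geom_h al N : 0 < al -> forall v, 0 <= v ->
  \sum_(0 <= k < N) hfun al (v * (2 ^+ k)^-1) <= mfun al v / (1 - theta al).
Proof.
move=> al0; have [th0 th1] := andP (theta_lt1 al0).
have d0 : 0 < 1 - theta al by rewrite subr_gt0.
elim: N => [|N IH] v v0.
  rewrite big_nil; apply: divr_ge0; last exact: ltW.
  by rewrite /mfun; case: ifP => _; [exact: powR_ge0 | exact: ler01].
rewrite big_nat_recl // expr0 invr1 mulr1.
have -> : \sum_(0 <= i < N) hfun al (v * (2 ^+ i.+1)^-1) =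
          \sum_(0 <= i < N) hfun al ((v / 2) * (2 ^+ i)^-1).
  by apply: eq_bigr => i _; rewrite exprS invfM mulrA.
have v20 : 0 <= v / 2 by rewrite divr_ge0.
apply: le_trans (lerD (lexx _) (IH _ v20)) _.
rewrite /hfun /mfun; case: ifP => v1.
  have v21 : v / 2 <= 1 by rewrite ler_pdivrMr // mul1r (le_trans v1) // ler1n.
  rewrite v21.
  have -> : Num.sqrt (v / 2) `^ al = theta al * Num.sqrt v `^ al.
    by rewrite /theta sqrtrM // powRM ?sqrtr_ge0 // mulrC.
  set p := Num.sqrt v `^ al.
  by rewrite le_eqVlt; apply/orP; left; apply/eqP; field; rewrite gt_eqF.
rewrite add0r ler_pM2r ?invr_gt0 //.
by have := mfun_le1 al0 v20; rewrite /mfun.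
Qed.
End S.

Arguments Pi {R}.
Section S.
Variable R : realType.
Local Notation C := (R[i]).

Lemma Pi_comp (s : seq C) (c : C) : c != 0 ->
  Pi s \Po (c *: 'X) = c ^+ size s *: Pi (map (fun z => z * c^-1) s).
Proof.
move=> c0; elim: s => [|z s IH].
  by rewrite /Pi !big_nil comp_polyC expr0 scale1r.
rewrite /Pi !big_cons /= -/(Pi s) -/(Pi (map _ s)) comp_polyM IH.
rewrite comp_polyB comp_polyX comp_polyC.
have -> : c *: 'X - z%:P = c *: ('X - (z * c^-1)%:P).
  by rewrite scalerBr [c *: (_ * _)%:P]scale_polyC mulrCA divff // mulr1.
by rewrite -scalerAl -scalerAr scalerA exprS.
Qed.

Definition Qk (n : nat) (P : {poly R}) (k : nat) : {poly R} :=
  ((2:R) ^- (n * k)) *: (P \Po ((2:R) ^+ k *: 'X)).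

Lemma Ptilde_horner n P k : Ptilde n P k = horner (Qk n P k).
Proof.
by apply/funext => x; rewrite /Ptilde /Qk hornerZ horner_comp hornerZ hornerX.
Qed.

Lemma Qk_map n P k (s : seq C) :
  map_poly (real_complex R) P = Pi s -> size s = n ->
  map_poly (real_complex R) (Qk n P k) =
  Pi (map (fun z => z * ((((2:R) ^+ k)%:C)%C)^-1) s).
Proof.
move=> HP sn.
rewrite /Qk map_polyZ map_comp_poly HP map_polyZ map_polyX Pi_comp; last first.
  by rewrite fmorph_eq0 expf_neq0 // pnatr_eq0.
rewrite scalerA sn.
have -> : real_complex R (2 ^- (n * k)) * (real_complex R (2 ^+ k)) ^+ n = 1.
  have e : (2:R) ^- (n * k) * (2 ^+ k) ^+ n = 1.
    by rewrite -exprM mulnC mulVf // expf_neq0 // pnatr_eq0.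
  by have := congr1 (real_complex R) e; rewrite rmorphM rmorphXn rmorph1.
by rewrite scale1r.
Qed.
Lemma qderiv (Q : {poly R}) (x : R) : Q^`().[x] != 0 ->
  derive1 (fun y => horner Q y / derive1 (horner Q) y) x =
  1 - Q.[x] * Q^`()^`().[x] / Q^`().[x]^+2.
Proof.
move=> h.
rewrite -derivE.
have D1 := is_derive_poly Q x.
have D2 := is_derive_poly Q^`() x.
have D3 := is_deriveV h D2.
have D4 := is_deriveM D1 D3.
rewrite derive1E.
have -> : (fun y => Q.[y] / Q^`().[y]) = (horner Q * (fun y => (Q^`().[y])^-1)) by [].
rewrite (@derive_val _ _ _ _ _ _ _ D4) /=.
rewrite /GRing.scale /=. rewrite !mulrA. field. exact h.
Qed.
End S.

Arguments Pi {R}.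
Arguments stepA {R Q s T x}.
Arguments Qk_map {R n P} k {s}.
Arguments qderiv {R Q x}.
Section S.
Variable R : realType.
Local Notation C := (R[i]).
Local Notation Re := (@complex.Re R).
Local Notation Im := (@complex.Im R).

Lemma Eset_cover (n : nat) (C1 : R) (P : {poly R}) (s : seq C) (k : nat) (x : R) :
  (0 < n)%N -> 0 < C1 ->
  map_poly (real_complex R) P = Pi s -> size s = n ->
  Eset n C1 P k x ->
  exists2 z, z \in s &
    (x - Re z * ((2:R) ^+ k)^-1) ^+ 2 + (Im z * ((2:R) ^+ k)^-1) ^+ 2 <=
    2 * n%:R * (4 / C1) * (`|Im z| * ((2:R) ^+ k)^-1).
Proof.
move=> n0 C10 HP sn.
rewrite /Eset /= Ptilde_horner => -[d0 [hT hq]].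
rewrite -derivE in d0 hT.
rewrite qderiv // in hq.
have HQ := Qk_map k HP sn.
have sk : size (map (fun z => z * ((((2:R) ^+ k)%:C)%C)^-1) s) = n by rewrite size_map.
rewrite -[in X in _ <= X]sk in hq.
have [||z' zs' hz] := stepA HQ _ _ d0 hT hq.
- by rewrite sk.
- by rewrite divr_gt0.
case/mapP: zs' => z zs ez.
exists z => //.
move: hz; rewrite sk ez -fmorphV /=.
case: z {zs ez} => u v /=.
rewrite !mulr0 subr0 add0r.
set r := ((2:R) ^+ k)^-1.
have r0 : 0 <= r by rewrite invr_ge0 exprn_ge0.
by rewrite normrM (ger0_norm r0).
Qed.
End S.

Section S.
Variable R : realType.
Local Notation C := (R[i]).
Local Notation Re := (@complex.Re R).
Local Notation Im := (@complex.Im R).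

Definition vv (K : R) (k : nat) (z : C) : R := `|Im z| / K * ((2:R) ^+ k)^-1.
Definition Ival (K : R) (k : nat) (z : C) : set R :=
  if vv K k z <= 1 then
    [set` `[Re z * ((2:R) ^+ k)^-1 - K * Num.sqrt (vv K k z),
            Re z * ((2:R) ^+ k)^-1 + K * Num.sqrt (vv K k z)]%R]
  else set0.
Definition gg (K : R) (k : nat) (z : C) : R :=
  if vv K k z <= 1 then 2 * K * Num.sqrt (vv K k z) else 0.

Lemma Ival_in (K : R) (k : nat) (z : C) (x : R) : 0 < K ->
  (x - Re z * ((2:R) ^+ k)^-1) ^+ 2 + (Im z * ((2:R) ^+ k)^-1) ^+ 2 <=
    K * (`|Im z| * ((2:R) ^+ k)^-1) -> Ival K k z x.
Proof.
move=> K0.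
set r := ((2:R) ^+ k)^-1.
have r0 : 0 <= r by rewrite invr_ge0 exprn_ge0.
set c := Re z * r; set w := `|Im z| * r.
have w0 : 0 <= w by rewrite mulr_ge0.
have ew : (Im z * r) ^+ 2 = w ^+ 2 by rewrite /w !exprMn real_normK // num_real.
rewrite ew => h.
have ev : vv K k z = w / K by rewrite /vv /w -/r mulrAC.
have h2 : w * w <= K * w by have := sqr_ge0 (x - c); rewrite -expr2; lra.
have hw : w <= K.
  rewrite leNgt; apply/negP => hK.
  have : K * w < w * w by rewrite ltr_pM2r // lt_def; apply/andP; split => //; apply/eqP => e0; move: hK; rewrite e0; rewrite ltNge (ltW K0).
  by rewrite ltNge h2.
rewrite /Ival ev ler_pdivrMr // mul1r hw /= in_itv /=.
rewrite -ler_distl.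
have : (x - c) ^+ 2 <= K ^+ 2 * (w / K).
  have -> : K ^+ 2 * (w / K) = K * w by field; rewrite gt_eqF.
  have : 0 <= w ^+ 2 by rewrite sqr_ge0.
  lra.
rewrite -ler_sqrt; last by rewrite mulr_ge0 ?sqr_ge0 // divr_ge0 // ltW.
by rewrite sqrtr_sqr sqrtrM ?sqr_ge0 // sqrtr_sqr (gtr0_norm K0).
Qed.

Lemma Ival_measurable K k z : measurable (Ival K k z).
Proof. by rewrite /Ival; case: ifP => _ //; apply: measurable_itv. Qed.

Lemma Ival_measure K k z : 0 < K -> (lebesgue_measure (Ival K k z) <= (gg K k z)%:E)%E.
Proof.
move=> K0; rewrite /Ival /gg; case: ifP => _; last by rewrite measure0.
rewrite lebesgue_measure_itv /=.
case: ifP => _; last by rewrite lee_fin !mulr_ge0 // ?sqrtr_ge0 // ltW.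
rewrite -EFinD lee_fin.
rewrite le_eqVlt; apply/orP; left; apply/eqP; ring.
Qed.

Lemma bigU_measure K k (s : seq C) : 0 < K ->
  (lebesgue_measure (\big[setU/set0]_(z <- s) Ival K k z) <=
   (\sum_(z <- s) gg K k z)%:E)%E.
Proof.
move=> K0; elim: s => [|z s IH]; first by rewrite !big_nil measure0.
have mU : forall t : seq C, measurable (\big[setU/set0]_(z <- t) Ival K k z).
  elim=> [|y t IHt]; first by rewrite big_nil.
  by rewrite big_cons; apply: measurableU => //; apply: Ival_measurable.
rewrite !big_cons EFinD.
have := measureU2 (@lebesgue_measure R) (Ival_measurable K k z) (mU s).
move=> hU; apply: le_trans hU _.
by apply: leeD => //; apply: Ival_measure.
Qed.
End S.

Arguments Pi {R}. Arguments gg {R}. Arguments vv {R}. Arguments Ival {R}. Arguments hfun {R}. Arguments mfun {R}. Arguments theta {R}.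
Arguments theta_lt1 {R al}. Arguments mfun_le1 {R al v}.
Arguments Eset_cover {R n C1 P s k x}. Arguments Ival_in {R K k z x}. Arguments bigU_measure {R K} k s. Arguments geom_h {R al} N. Arguments series_le {R}. Arguments powR_subadd_seq {R T}. Arguments sum_le_const {R T}.
Local Notation Re := (@complex.Re _).
Local Notation Im := (@complex.Im _).

Lemma in_bigU (R : realType) (T : eqType) (s : seq T) (F : T -> set R) z x :
  z \in s -> F z x -> (\big[setU/set0]_(y <- s) F y) x.
Proof.
elim: s => [|y s IH] //; rewrite inE big_cons => /orP[/eqP <-|zs] h.
  by left.
by right; apply: IH.
Qed.

Lemma gg_pow (R : realType) (K al : R) k (z : R[i]) : 0 < K -> 0 < al ->
  gg K k z `^ al = (2 * K) `^ al * hfun al (vv K k z).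
Proof.
move=> K0 al0; rewrite /gg /hfun; case: ifP => _.
  rewrite powRM // ?sqrtr_ge0 // mulr_ge0 // ltW //.
by rewrite mulr0 powR0 // gt_eqF.
Qed.

Lemma leb_mono {R : realType} {A B : set R} : A `<=` B ->
  (lebesgue_measure A <= lebesgue_measure B)%E.
Proof. move=> AB. exact: le_mu_ext. Qed.

Theorem lemma3p4 (R : realType) (n : nat) (C1 alpha : R) :
  (0 < n)%N -> 0 < C1 -> 0 < alpha < 1 ->
  exists C : R, forall P : {poly R},
    P \is monic -> size P = n.+1 ->
    (\sum_(0 <= k <oo) ((@lebesgue_measure R (Eset n C1 P k)) `^ alpha)
       <= C%:E)%E.
Proof.
move=> n0 C10 /andP[al0 al1].
set K := 2 * n%:R * (4 / C1).
have K0 : 0 < K by rewrite /K !mulr_gt0 // ?ltr0n // invr_gt0.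
have [th0 th1] := andP (theta_lt1 al0).
have d0 : 0 < 1 - theta alpha by rewrite subr_gt0.
exists (n%:R * ((2 * K) `^ alpha / (1 - theta alpha))).
move=> P Pm sP.
have [s Hs] := closed_field_poly_normal (map_poly (real_complex R) P).
have HP : map_poly (real_complex R) P = Pi s.
  rewrite Hs lead_coef_map /= (monicP Pm) rmorph1 scale1r //.
have sn : size s = n.
  have : size (map_poly (real_complex R) P) = size (Pi s) by rewrite HP.
  by rewrite size_map_poly sP /Pi size_prod_XsubC => -[].
have key : forall k, ((lebesgue_measure (Eset n C1 P k)) `^ alpha <=
   (\sum_(z <- s) (2 * K) `^ alpha * hfun alpha (vv K k z))%:E)%E.
  move=> k.
  have sub : Eset n C1 P k `<=` \big[setU/set0]_(z <- s) Ival K k z.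
    move=> x hx.
    have [z zs hz] := Eset_cover n0 C10 HP sn hx.
    have := @in_bigU R _ s (Ival K k) z x zs; apply; exact: Ival_in.
  have h1 := le_trans (leb_mono sub) (bigU_measure k s K0).
  have gg0 : forall z, 0 <= gg K k z.
    by move=> z; rewrite /gg; case: ifP => _ //; apply: mulr_ge0; [apply: mulr_ge0 => //; exact: ltW | exact: sqrtr_ge0].
  have h2 := gt0_ler_poweR (ltW al0) _ _ h1.
  apply: le_trans (h2 _ _) _.
  - by rewrite in_itv /= measure_ge0 leey.
  - by rewrite in_itv /= lee_fin sumr_ge0 // leey.
  rewrite poweR_EFin lee_fin.
  have hal : 0 < alpha <= 1 by rewrite al0 ltW.
  apply: le_trans (powR_subadd_seq s (gg K k) alpha gg0 hal) _.
  by rewrite le_eqVlt; apply/orP; left; apply/eqP; apply: eq_bigr => z _; rewrite gg_pow.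
apply: series_le; first by move=> k; apply: poweR_ge0.
move=> N.
apply: (@le_trans _ _ (\sum_(0 <= k < N) (\sum_(z <- s) (2 * K) `^ alpha * hfun alpha (vv K k z))%:E)%E).
  by apply: lee_sum => k _; apply: key.
rewrite sumEFin lee_fin exchange_big /=.
rewrite -sn.
apply: sum_le_const => z zs.
rewrite -mulr_sumr ler_pM2l; last by apply: powR_gt0; rewrite mulr_gt0.
have v0 : 0 <= `|Im z| / K by rewrite divr_ge0 // ltW.
rewrite /vv; apply: le_trans (geom_h N al0 _ v0) _.
rewrite -[X in _ <= X]mul1r ler_pM2r ?invr_gt0 //.
exact: mfun_le1.
Qed.
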